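(* Let $p=(p_1(\cdot),\dots,p_N(\cdot))$ and $q=(q_1(\cdot),\dots,q_N(\cdot))$ be growth laws on $\mathcal O_N$, and let $(\eta(t))$, $(\sigma(t))$ be the ordered growth processes with laws $p$ and $q$ respectively. Assume that for all $\eta,\sigma\in\mathcal O_N$ with $\eta\prec\sigma$, $$\sum_{i=1}^k p_i(\eta)\le\sum_{i=1}^k q_i(\sigma)\qquad\text{for all }k=1,\dots,N.$$ Then, whenever $\eta(0),\sigma(0)\in\mathcal O_N$ satisfy $\eta(0)\prec\sigma(0)$, there is a coupling of the two processes such that $\eta(t)\prec\sigma(t)$ for all $t\ge0$.
   Context: $\mathcal O_N$ is the set of $\eta\in\mathbb N^N$ with $\eta_1\ge\dots\ge\eta_N$; for $\sigma\in\mathbb N^N$, $\bar\sigma$ is its nonincreasing rearrangement and $|\sigma|=\sum_i\sigma_i$. For $|\sigma|=|\eta|$, $\eta\prec\sigma$ (equivalently $\sigma\succ\eta$) means $\sum_{i=1}^k\bar\eta_i\le\sum_{i=1}^k\bar\sigma_i$ for all $k=1,\dots,N$. A growth law $p$ assigns to each $\eta\in\mathcal O_N$ a probability vector $(p_1(\eta),\dots,p_N(\eta))$. The ordered growth process with law $p$ is the Markov chain on $\mathcal O_N$ which, from state $\eta$, picks an index $J$ with $P(J=i)=p_i(\eta)$ and moves to $\overline{\eta+e_J}$ (the nonincreasing rearrangement of $\eta$ with one unit added at position $J$). *)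

(* Defs.v *)
From HB Require Import structures.
From mathcomp Require Import all_boot all_order all_algebra.
Set Implicit Arguments. Unset Strict Implicit. Unset Printing Implicit Defensive.
Import Order.TTheory GRing.Theory Num.Theory.

(* A configuration in N^N, coordinates indexed by 'I_N (i.e. 0..N-1 for 1..N). *)
Definition config (N : nat) := {ffun 'I_N -> nat}.

Definition ordered N (x : config N) : Prop :=
  forall i j : 'I_N, (i <= j)%N -> (x j <= x i)%N.

Definition rearr N (x : config N) : config N :=
  [ffun i : 'I_N => nth 0%N (sort geq [seq x j | j <- enum 'I_N]) i].

Definition tot N (x : config N) : nat := (\sum_(i < N) x i)%N.

Definition prec N (x y : config N) : Prop :=
  tot x = tot y /\
  forall k, (k <= N)%N ->
    (\sum_(i < N | (i < k)%N) rearr x i <= \sum_(i < N | (i < k)%N) rearr y i)%N.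

Definition step N (x : config N) (i : 'I_N) : config N :=
  rearr [ffun j : 'I_N => (x j + (j == i))%N].

(* A growth law: to each eta in O_N a probability vector (p_1(eta),...,p_N(eta)).
   Values at non-ordered configurations are irrelevant. *)
Definition growth_law (R : realFieldType) N (p : config N -> 'I_N -> R) : Prop :=
  forall x : config N, ordered x ->
    (forall i, (0 <= p x i)%R) /\ (\sum_(i < N) p x i = 1)%R.

(* A Markovian coupling of the two ordered growth processes: from the pair
   state (eta, sigma), the pair of chosen indices (J, J') is drawn with joint
   law K eta sigma, whose marginals are p(eta) and q(sigma); then
   (eta, sigma) moves to (step eta J, step sigma J'). *)
Definition coupling_kernel (R : realFieldType) N
    (p q : config N -> 'I_N -> R)
    (K : config N -> config N -> 'I_N -> 'I_N -> R) : Prop :=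
  forall x y : config N, ordered x -> ordered y ->
    (forall i j, (0 <= K x y i j)%R) /\
    (forall i, (\sum_(j < N) K x y i j = p x i)%R) /\
    (forall j, (\sum_(i < N) K x y i j = q y j)%R).

(* reach K t (x0,y0) (x,y): the coupled chain can be at (x,y) at time t
   with positive probability, starting from (x0,y0). *)
Inductive reach (R : realFieldType) N
    (K : config N -> config N -> 'I_N -> 'I_N -> R)
    (x0 y0 : config N) : nat -> config N -> config N -> Prop :=
| reach0 : reach K x0 y0 0 x0 y0
| reachS : forall t x y i j, reach K x0 y0 t x y -> (0 < K x y i j)%R ->
    reach K x0 y0 t.+1 (step x i) (step y j).

(* Main.v *)
Require Import Defs.
From HB Require Import structures.
From mathcomp Require Import all_boot all_order all_algebra all_fingroup.
Import Order.TTheory GRing.Theory Num.Theory.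
From mathcomp Require Import zify lra.
Set Implicit Arguments. Unset Strict Implicit. Unset Printing Implicit Defensive.

Lemma geq_trans' : transitive geq.
Proof. by move=> a b c /= H1 H2; apply: leq_trans H2 H1. Qed.
Lemma geq_total' : total geq.
Proof. by move=> a b /=; rewrite leq_total. Qed.
Lemma geq_anti' : antisymmetric geq.
Proof. by move=> a b /= H; apply/anti_leq; rewrite andbC. Qed.

Lemma sorted_ord N (w : config N) : ordered w ->
  sorted geq [seq w j | j <- enum 'I_N].
Proof.
move=> Hw.
have H1 : sorted (fun a b : 'I_N => (a <= b)%N) (enum 'I_N).
  by have := iota_sorted 0 N; rewrite -val_enum_ord sorted_map.
apply: (homo_sorted (f:=w) (e:=fun a b : 'I_N => (a <= b)%N) (e':=geq) _ (enum 'I_N) H1).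
move=> a b /= Hab; exact: Hw.
Qed.

Lemma rearr_ord N (w : config N) : ordered w -> rearr w = w.
Proof.
move=> Hw; apply/ffunP => i; rewrite ffunE sorted_sort.
- by rewrite (nth_map i) ?size_enum_ord ?ltn_ord // nth_ord_enum.
- exact: geq_trans'.
- exact: sorted_ord.
Qed.

Lemma rearr_perm N (z w : config N) :
  perm_eq [seq z j | j <- enum 'I_N] [seq w j | j <- enum 'I_N] ->
  rearr z = rearr w.
Proof.
move=> H; apply/ffunP => i; rewrite !ffunE.
by rewrite (perm_sortP geq_total' geq_trans' geq_anti' _ _ H).
Qed.

Lemma perm_swp N (w : config N) (s i : 'I_N) :
  perm_eq [seq w (tperm s i j) | j <- enum 'I_N] [seq w j | j <- enum 'I_N].
Proof.
rewrite (map_comp w (tperm s i)); apply: perm_map.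
apply: uniq_perm; first by rewrite map_inj_uniq ?enum_uniq //; exact: perm_inj.
  exact: enum_uniq.
move=> a; rewrite mem_enum inE; apply/mapP; exists (tperm s i a); first by rewrite mem_enum.
by rewrite tpermK.
Qed.

Lemma step_ord N (x : config N) (i : 'I_N) : ordered x ->
  exists s : 'I_N, [/\ (s <= i)%N, x s = x i,
    (forall a : 'I_N, (a < s)%N -> x i < x a)%N &
    step x i = [ffun l => (x l + (l == s))%N]].
Proof.
move=> Hx.
have exP : exists n, (n < N) && [exists a : 'I_N, (val a == n) && (x a == x i)].
  by exists (val i); rewrite ltn_ord; apply/existsP; exists i; rewrite !eqxx.
case: (ex_minnP exP) => n /andP [nN /existsP [s /andP [/eqP sn /eqP xs]]] Hmin.
subst n.
have Hsi : (s <= i)%N by apply: Hmin; rewrite ltn_ord; apply/existsP; exists i; rewrite !eqxx.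
have Hlt : forall a : 'I_N, (a < s)%N -> (x i < x a)%N.
  move=> a Ha; rewrite ltn_neqAle -xs Hx ?(ltnW Ha) // andbT.
  apply/negP => /eqP E; have := Hmin a; rewrite ltn_ord /=.
  have -> : [exists a0 : 'I_N, (val a0 == val a) && (x a0 == x i)].
    by apply/existsP; exists a; rewrite eqxx -E xs eqxx.
  by move=> /(_ isT); rewrite leqNgt Ha.
exists s; split => //.
set w := [ffun l => (x l + (l == s))%N].
have Hw : ordered w.
  move=> a b Hab; rewrite !ffunE.
  case: (eqVneq b s) => [Eb|Nb].
    subst b; case: (eqVneq a s) => [->//|Na].
    have Has : (a < s)%N by rewrite ltn_neqAle Hab andbT; apply: contra Na => /eqP E; apply/eqP/val_inj.
    by have := Hlt a Has; rewrite -xs /=; lia.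
  by rewrite /= addn0; apply: leq_trans (Hx _ _ Hab) (leq_addr _ _).
rewrite /step -(rearr_ord Hw); apply: rearr_perm.
have -> : [seq [ffun j => (x j + (j == i))%N] j | j <- enum 'I_N] = [seq w (tperm s i j) | j <- enum 'I_N].
  apply: eq_map => l; rewrite !ffunE.
  case: (eqVneq s i) => [Esi|Nsi].
    by rewrite -Esi tperm1 perm1.
  case: (eqVneq l s) => [->|ls].
    by rewrite tpermL xs eq_sym.
  case: (l =P i) => [->|/eqP li]; first by rewrite tpermR !eqxx xs.
  have H1 : s != l by rewrite eq_sym.
  have H2 : i != l by rewrite eq_sym.
  by rewrite tpermD // (negbTE ls).
exact: (perm_swp w s i).
Qed.

Lemma core N (f g : nat -> nat) (s t i : nat) :
  (forall a b, a <= b -> b < N -> f b <= f a) ->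
  (forall a b, a <= b -> b < N -> g b <= g a) ->
  (forall k, k <= N -> \sum_(l < k) f l <= \sum_(l < k) g l) ->
  i < N -> s <= i -> f s = f i -> t <= i -> (0 < t -> g t.-1 != g t) ->
  forall k, k <= N -> \sum_(l < k) f l + (s < k) <= \sum_(l < k) g l + (t < k).
Proof.
move=> Hf Hg HS iN si fsi ti Ht.
set A := fun k => \sum_(l < k) f l.
set B := fun k => \sum_(l < k) g l.
have AS : forall k, A k.+1 = A k + f k by move=> k; rewrite /A big_ord_recr.
have BS : forall k, B k.+1 = B k + g k by move=> k; rewrite /B big_ord_recr.
have HS' : forall k, k <= N -> A k <= B k by exact: HS.
have step : forall m, s <= m -> m.+1 <= t -> A m.+1 = B m.+1 ->
    g m.+1 = g m /\ A m.+2 = B m.+2.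
  move=> m sm mt E.
  have h1 := HS' m ltac:(lia). have h2 := HS' m.+2 ltac:(lia).
  have := AS m; have := AS m.+1; have := BS m; have := BS m.+1.
  have := Hf m m.+1 ltac:(lia) ltac:(lia).
  have := Hf s m ltac:(lia) ltac:(lia).
  have := Hf m.+1 i ltac:(lia) ltac:(lia).
  have := Hg m m.+1 ltac:(lia) ltac:(lia).
  lia.
have key : forall d m, s <= m -> m.+1 + d = t -> A m.+1 = B m.+1 -> False.
  elim=> [|d IH] m sm Ed E.
  - have [g1 _] := step m sm ltac:(lia) E.
    have := Ht ltac:(lia); rewrite -Ed addn0 /= g1 eqxx; by [].
  - have [_ E2] := step m sm ltac:(lia) E.
    by apply: (IH m.+1); [lia | lia | exact: E2].
move=> k Hk.
case: (leqP k s) => ks.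
  have := HS' k Hk; rewrite /A /B; case: (t < k); lia.
case: (ltnP t k) => tk.
  have := HS' k Hk; rewrite /A /B; lia.
have : A k != B k.
  apply/eqP => E; case: k Hk ks tk E => [|m] Hk ks tk E; first by [].
  by apply: (key (t - m.+1) m); [lia | lia | exact: E].
have := HS' k Hk; rewrite /A /B; lia.
Qed.

Lemma step_ordered N (x : config N) (i : 'I_N) : ordered x -> ordered (step x i).
Proof.
move=> Hx; have [s [si xs Hlt ->]] := step_ord i Hx.
move=> a b Hab; rewrite !ffunE.
case: (eqVneq b s) => [Eb|Nb].
  subst b; case: (eqVneq a s) => [->//|Na].
  have Has : (a < s)%N by rewrite ltn_neqAle Hab andbT; apply: contra Na => /eqP E; apply/eqP/val_inj.
  by have := Hlt a Has; rewrite -xs /=; lia.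
by rewrite /= addn0; apply: leq_trans (Hx _ _ Hab) (leq_addr _ _).
Qed.

Lemma psum N (x : config N) (s : 'I_N) k :
  (\sum_(l < N | (l < k)%N) (x l + (l == s)) =
   \sum_(l < N | (l < k)%N) x l + (s < k))%N.
Proof.
rewrite big_split /=; congr (_ + _)%N.
case: (ltnP s k) => sk.
  rewrite (bigD1 s) //= eqxx big1 // => l /andP [_ ls]; by rewrite (negbTE ls).
rewrite big1 // => l lk; case: (eqVneq l s) => [E|//]; subst l; by move: lk; rewrite ltnNge sk.
Qed.

Definition fof N (x : config N) (n : nat) : nat :=
  if (insub n : option 'I_N) is Some o then x o else 0%N.

Lemma fofE N (x : config N) (o : 'I_N) : fof x o = x o.
Proof. by rewrite /fof valK. Qed.

Lemma fof_sum N (x : config N) k : (k <= N)%N ->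
  \sum_(l < N | (l < k)%N) x l = \sum_(l < k) fof x l.
Proof.
move=> Hk; rewrite (big_ord_widen N (fof x) Hk); apply: eq_bigr => l _.
by rewrite fofE.
Qed.

Lemma fof_mono N (x : config N) : ordered x ->
  forall a b, (a <= b)%N -> (b < N)%N -> (fof x b <= fof x a)%N.
Proof.
move=> Hx a b ab bN.
have aN : (a < N)%N by apply: leq_ltn_trans ab bN.
rewrite -[a]/(val (Ordinal aN)) -[b]/(val (Ordinal bN)) !fofE; exact: Hx.
Qed.

Lemma prec_ord N (x y : config N) : ordered x -> ordered y ->
  prec x y <-> (tot x = tot y /\ forall k, (k <= N)%N ->
    (\sum_(i < N | (i < k)%N) x i <= \sum_(i < N | (i < k)%N) y i)%N).
Proof. by move=> Hx Hy; rewrite /prec !rearr_ord. Qed.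

Lemma tot_sum N (x : config N) : tot x = (\sum_(l < N | (l < N)%N) x l)%N.
Proof. by rewrite /tot; apply: eq_bigl => l; rewrite ltn_ord. Qed.

Lemma step_prec N (x y : config N) (i j : 'I_N) :
  ordered x -> ordered y -> prec x y -> (j <= i)%N ->
  prec (step x i) (step y j).
Proof.
move=> Hx Hy Hp ji.
have Ox := step_ordered i Hx; have Oy := step_ordered j Hy.
have [s [si xs _ Ex]] := step_ord i Hx.
have [t [tj yt Hlt Ey]] := step_ord j Hy.
move: Hp; rewrite (prec_ord Hx Hy) (prec_ord Ox Oy) => -[Htot Hk].
rewrite Ex Ey; split.
  rewrite !tot_sum.
  under eq_bigr => l _ do rewrite ffunE.
  under [in RHS]eq_bigr => l _ do rewrite ffunE.
  by rewrite !psum !ltn_ord -!tot_sum Htot.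
move=> k kN.
under eq_bigr => l _ do rewrite ffunE.
under [in X in (_ <= X)%N]eq_bigr => l _ do rewrite ffunE.
rewrite !psum !fof_sum //.
apply: (@core N (fof x) (fof y) s t i (fof_mono Hx) (fof_mono Hy)).
- by move=> k' k'N; rewrite -!fof_sum //; exact: Hk.
- exact: ltn_ord.
- exact: si.
- by rewrite !fofE.
- exact: leq_trans tj ji.
- move=> t0; have t1N : (t.-1 < N)%N by apply: leq_ltn_trans (leq_pred _) (ltn_ord t).
  rewrite -[t.-1]/(val (Ordinal t1N)) !fofE yt.
  by rewrite neq_ltn Hlt ?orbT //=; lia.
- exact: kN.
Qed.

Section RealPart.
Local Open Scope ring_scope.

Definition ovl (R : realFieldType) (b a c d : R) := Num.max 0 (Num.min a d - Num.max b c).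
Definition clp (R : realFieldType) (b a t : R) := Num.min a (Num.max b t).

Ltac splitif := repeat (case: ifP; [move=> ? | move/negbT; rewrite -ltNge => ?]).

Lemma ovl_clp (R : realFieldType) (b a c d : R) : b <= a -> c <= d ->
  ovl b a c d = clp b a d - clp b a c.
Proof.
move=> ba cd; rewrite /ovl /clp !maxEle !minEle.
case: (lerP a d) => ?; case: (lerP b c) => ?; case: (lerP b d) => ?; case: (lerP a b) => ?; case: (lerP a c) => ?; splitif; lra.
Qed.

Lemma ovlC (R : realFieldType) (b a c d : R) : ovl b a c d = ovl c d b a.
Proof. by rewrite /ovl (minC a d) (maxC b c). Qed.

Lemma ovl_ge0 (R : realFieldType) (b a c d : R) : 0 <= ovl b a c d.
Proof. by rewrite /ovl le_max lexx. Qed.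

Lemma ovl_pos (R : realFieldType) (b a c d : R) : 0 < ovl b a c d -> c < a.
Proof.
rewrite /ovl !maxEle !minEle.
case: (lerP a d) => ?; case: (lerP b c) => ?; splitif; lra.
Qed.

Lemma marg (R : realFieldType) (Q : nat -> R) N (a b : R) :
  0 <= b -> b <= a -> a <= 1 -> Q 0%N = 0 -> Q N = 1 -> (forall k, Q k <= Q k.+1) ->
  \sum_(j < N) ovl b a (Q j) (Q j.+1) = a - b.
Proof.
move=> b0 ba a1 Q0 QN Qm.
rewrite (eq_bigr (fun j : 'I_N => clp b a (Q j.+1) - clp b a (Q j))); last first.
  by move=> j _; rewrite ovl_clp.
rewrite -(big_mkord xpredT (fun j => clp b a (Q j.+1) - clp b a (Q j))).
rewrite telescope_sumr // QN Q0 /clp !maxEle !minEle.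
case: (lerP b 1) => ?; case: (lerP b 0) => ?; splitif; lra.
Qed.

Section PS.
Variables (R : realFieldType) (N : nat) (F : 'I_N -> R).
Hypothesis F0 : forall i, 0 <= F i.
Definition S k := \sum_(l < N | (l < k)%N) F l.

Lemma S_mono k k' : (k <= k')%N -> S k <= S k'.
Proof.
move=> kk; rewrite /S [X in _ <= X](bigID (fun l : 'I_N => (l < k)%N)) /=.
have -> : \sum_(i < N | (i < k')%N && (i < k)%N) F i = \sum_(i < N | (i < k)%N) F i.
  by apply: eq_bigl => l; case lk: (l < k)%N; rewrite ?andbT ?andbF // (leq_trans lk kk).
by rewrite lerDl sumr_ge0.
Qed.

Lemma S_succ (i : 'I_N) : S i.+1 = S i + F i.
Proof.
rewrite /S (bigD1 i) //= addrC; congr (_ + _); apply: eq_bigl => l.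
by rewrite ltnS ltn_neqAle andbC.
Qed.

Lemma S0 : S 0 = 0.
Proof. by rewrite /S big_pred0. Qed.

Lemma SN : S N = \sum_(l < N) F l.
Proof. by rewrite /S; apply: eq_bigl => l; rewrite ltn_ord. Qed.

Lemma S_ge0 k : 0 <= S k.
Proof. by rewrite -S0; apply: S_mono. Qed.

Lemma S_big k : (N <= k)%N -> S k = S N.
Proof. by move=> Nk; rewrite /S; apply: eq_bigl => l; rewrite !(leq_trans (ltn_ord l)). Qed.
End PS.

End RealPart.

Theorem proposition3p1 (R : realFieldType) (N : nat)
    (p q : config N -> 'I_N -> R) :
  growth_law p -> growth_law q ->
  (forall x y : config N, ordered x -> ordered y -> prec x y ->
     forall k, (k <= N)%N ->
       (\sum_(i < N | (i < k)%N) p x i <= \sum_(i < N | (i < k)%N) q y i)%R) ->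
  forall x0 y0 : config N, ordered x0 -> ordered y0 -> prec x0 y0 ->
  exists K : config N -> config N -> 'I_N -> 'I_N -> R,
    coupling_kernel p q K /\
    (forall t x y, reach K x0 y0 t x y -> prec x y).
Proof.
move=> Gp Gq Hpq x0 y0 Ox0 Oy0 P0.
pose K := fun x y (i j : 'I_N) =>
  ovl (S (p x) i) (S (p x) i.+1) (S (q y) j) (S (q y) j.+1).
exists K; split.
  move=> x y Ox Oy; have [p0 p1] := Gp x Ox; have [q0 q1] := Gq y Oy.
  have Sp1 : S (p x) N = 1%R by rewrite SN.
  have Sq1 : S (q y) N = 1%R by rewrite SN.
  split; [|split].
  - by move=> i j; exact: ovl_ge0.
  - move=> i; rewrite /K marg.
    + rewrite S_succ; lra.
    + exact: S_ge0.
    + exact: S_mono.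
    + by rewrite -Sp1; apply: S_mono.
    + exact: S0.
    + exact: Sq1.
    + by move=> k; apply: S_mono.
  - move=> j; rewrite /K.
    under eq_bigr => i _ do rewrite ovlC.
    rewrite marg.
    + rewrite S_succ; lra.
    + exact: S_ge0.
    + exact: S_mono.
    + by rewrite -Sq1; apply: S_mono.
    + exact: S0.
    + exact: Sp1.
    + by move=> k; apply: S_mono.
have inv : forall t x y, reach K x0 y0 t x y -> [/\ ordered x, ordered y & prec x y].
  move=> t x y; elim=> [|t' x' y' i j _ [Ox Oy Pxy] Kpos]; first by split.
  have [q0 _] := Gq y' Oy.
  have ji : (j <= i)%N.
    rewrite leqNgt; apply/negP => ij.
    have h1 := ovl_pos Kpos.
    have h2 := Hpq x' y' Ox Oy Pxy i.+1 (ltn_ord i).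
    have h3 := S_mono q0 ij.
    rewrite /S in h1 h3; lra.
  split; [exact: step_ordered | exact: step_ordered | exact: step_prec].
by move=> t x y /inv [].
Qed.
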